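(* For each $t\in\{0,1,\dots,T-1\}$ and $i\in\{1,\dots,N\}$: (i) for every $a\in\mathbb{Z}$, $\Delta G^{N,i}_t(a,k)=G^{N,i}_t(a+1,k)-G^{N,i}_t(a,k)$ is non-increasing in $k\in\mathbb{N}_0$; and (ii) for every $x\in\mathbb{Z}$, $\Delta\tilde V^{N,i}_t(x,k)=\tilde V^{N,i}_t(x+1,k)-\tilde V^{N,i}_t(x,k)$ is non-increasing in $k\in\mathbb{N}_0$.
   Context: Spare parts setting. Fix integers $N\ge1$, $T\ge1$, reals $\alpha_0,\beta_0>0$, and for each $i\in\{1,\dots,N\}$ unit costs $c_v^i,c_h^i,c_b^i>0$ (transportation, holding, backorder) with $c_b^i>c_v^i$. $\mathbb{N}_0=\{0,1,2,\dots\}$, $y^+=\max(y,0)$. For real $r>0$ and $p\in(0,1)$, $NB(r,p)$ is the distribution on $\mathbb{N}_0$ with $P(n)=\frac{\Gamma(n+r)}{\Gamma(r)n!}p^r(1-p)^n$; $NB(0,p)$ is the point mass at $0$. For $t\in\{0,\dots,T\}$ let $p_t=\frac{\beta_0+Nt}{\beta_0+Nt+1}$. At epoch $t$ and statistic $k$ let $Z\sim NB(\alpha_0+k,p_t)$, $K\sim NB((N-1)(\alpha_0+k),p_t)$ independent, and $C_i(a,x,k)=c_v^i(a-x)+c_h^i\mathbb{E}[(a-Z)^+]+c_b^i\mathbb{E}[(Z-a)^+]$. Define $\tilde V^{N,i}_T\equiv0$ and for $t=T-1,\dots,0$, $(x,k)\in\mathbb{Z}\times\mathbb{N}_0$: $\tilde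 V^{N,i}_t(x,k)=\min_{a\in\mathbb{Z},a\ge x}\{C_i(a,x,k)+\mathbb{E}[\tilde V^{N,i}_{t+1}(a-Z,k+Z+K)]\}$. For $t\in\{0,\dots,T-1\}$ let $G^{N,i}_t(a,k)=c_v^ia+c_h^i\mathbb{E}[(a-Z)^+]+c_b^i\mathbb{E}[(Z-a)^+]+\mathbb{E}[\tilde V^{N,i}_{t+1}(a-Z,k+Z+K)]$, so that $\tilde V^{N,i}_t(x,k)=\min_{a\ge x}\{G^{N,i}_t(a,k)-c_v^ix\}$. *)

(* Defs.v *)
From Stdlib Require Import Reals ZArith.
From Coquelicot Require Import Coquelicot.
Open Scope R_scope.

(* rising factorial r (r+1) ... (r+n-1) = Gamma(n+r)/Gamma(r) for r > 0 *)
Fixpoint rising (r : R) (n : nat) : R :=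
  match n with O => 1 | S m => rising r m * (r + INR m) end.

(* NB(r,p) pmf; for r = 0 this is the point mass at 0 (rising 0 n = 0 for n>=1,
   Rpower p 0 = 1). *)
Definition nb_pmf (r p : R) (n : nat) : R :=
  rising r n / INR (fact n) * Rpower p r * (1 - p) ^ n.

Definition E_nb (r p : R) (f : nat -> R) : R :=
  Series (fun n => nb_pmf r p n * f n).

(* expectation of g(Z,K), Z ~ NB(r1,p), K ~ NB(r2,p) independent *)
Definition E_nb2 (r1 r2 p : R) (g : nat -> nat -> R) : R :=
  Series (fun n => nb_pmf r1 p n *
     Series (fun m => nb_pmf r2 p m * g n m)).

Definition pos (y : R) : R := Rmax y 0.

(* infimum of F over the integers a >= x (the min in the paper) *)
Definition inf_ge (x : Z) (F : Z -> R) : R :=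
  real (Glb_Rbar (fun y => exists a : Z, (x <= a)%Z /\ y = F a)).

Section Model.
Variables (N T : nat) (alpha0 beta0 : R) (cv ch cb : nat -> R).

Definition p_t (t : nat) : R :=
  (beta0 + INR N * INR t) / (beta0 + INR N * INR t + 1).

Definition rZ (k : nat) : R := alpha0 + INR k.
Definition rK (k : nat) : R := (INR N - 1) * (alpha0 + INR k).

Definition Ccost (i t : nat) (a x : Z) (k : nat) : R :=
  cv i * IZR (a - x) + ch i * E_nb (rZ k) (p_t t) (fun n => pos (IZR a - INR n))
  + cb i * E_nb (rZ k) (p_t t) (fun n => pos (INR n - IZR a)).

(* Vaux i m t = tilde V^{N,i}_t when m = T - t steps remain *)
Fixpoint Vaux (i m t : nat) (x : Z) (k : nat) : R :=
  match m with
  | O => 0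
  | S m' => inf_ge x (fun a =>
      Ccost i t a x k +
      E_nb2 (rZ k) (rK k) (p_t t)
        (fun n l => Vaux i m' (S t) (a - Z.of_nat n)%Z (k + n + l)%nat))
  end.

Definition Vt (i t : nat) (x : Z) (k : nat) : R := Vaux i (T - t) t x k.

Definition Gt (i t : nat) (a : Z) (k : nat) : R :=
  cv i * IZR a + ch i * E_nb (rZ k) (p_t t) (fun n => pos (IZR a - INR n))
  + cb i * E_nb (rZ k) (p_t t) (fun n => pos (INR n - IZR a))
  + E_nb2 (rZ k) (rK k) (p_t t)
      (fun n l => Vt i (S t) (a - Z.of_nat n)%Z (k + n + l)%nat).

End Model.

(* Main.v *)
Require Import Defs.
From Stdlib Require Import Reals ZArith.
From Coquelicot Require Import Coquelicot.
From Stdlib Require Import Lia Lra Psatz.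
Open Scope R_scope.


Lemma Series_le_gen (a b : nat -> R) :
  ex_series a -> ex_series b -> (forall n, a n <= b n) -> Series a <= Series b.
Proof.
  intros Ha Hb H.
  assert (Z0 : Series (fun _ => 0) = 0).
  { rewrite (Series_ext _ (fun n => 0 * 1)) by (intros; ring). rewrite Series_scal_l. ring. }
  assert (Series (fun n => b n - a n) = Series b - Series a) by (apply Series_minus; auto).
  assert (0 <= Series (fun n => b n - a n)).
  { rewrite <- Z0.
    apply Series_le. intros n; specialize (H n); lra.
    apply (ex_series_minus b a); auto. }
  lra.
Qed.

Lemma ex_series_ratio (a : nat -> R) (th : R) (n0 : nat) :
  (forall n, 0 <= a n) -> 0 <= th < 1 ->
  (forall n, (n0 <= n)%nat -> a (S n) <= th * a n) -> ex_series a.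
Proof.
  intros Hpos Hth Hr.
  apply (ex_series_incr_n a n0).
  assert (Hb : forall k, a (n0 + k)%nat <= a n0 * th ^ k).
  { induction k. rewrite Nat.add_0_r; simpl; lra.
    replace (n0 + S k)%nat with (S (n0 + k)) by lia.
    eapply Rle_trans. apply Hr; lia. simpl.
    replace (a n0 * (th * th ^ k)) with (th * (a n0 * th ^ k)) by ring.
    apply Rmult_le_compat_l; lra. }
  apply (@ex_series_le R_AbsRing R_CompleteNormedModule _ (fun k => a n0 * th ^ k)).
  - intros n. change (norm (a (n0 + n)%nat)) with (Rabs (a (n0+n)%nat)).
    rewrite Rabs_pos_eq by auto. apply Hb.
  - apply (ex_series_scal_l (a n0) (fun k => th ^ k)).
    apply ex_series_geom. rewrite Rabs_pos_eq; lra.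
Qed.

Lemma exists_big (x : R) : exists n : nat, x <= INR n.
Proof.
  destruct (archimed x) as [H1 _].
  exists (Z.to_nat (up x)).
  destruct (Z_le_gt_dec 0 (up x)).
  - rewrite INR_IZR_INZ, Z2Nat.id by auto. lra.
  - replace (Z.to_nat (up x)) with 0%nat by lia. simpl. assert (up x < 0)%Z as g2 by lia. apply IZR_lt in g2. lra.
Qed.

Definition cr (r : R) (n : nat) : R := rising r n / INR (fact n).

Lemma rising_nonneg r n : 0 <= r -> 0 <= rising r n.
Proof. intros Hr; induction n; simpl. lra. apply Rmult_le_pos; auto. pose proof (pos_INR n); lra. Qed.

Lemma INR_fact_pos n : 0 < INR (fact n).
Proof. apply lt_0_INR, lt_O_fact. Qed.

Lemma cr_nonneg r n : 0 <= r -> 0 <= cr r n.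
Proof. intros; unfold cr. apply Rdiv_le_0_compat. apply rising_nonneg; auto. apply INR_fact_pos. Qed.

Lemma cr_S r n : cr r (S n) = cr r n * ((r + INR n) / INR (S n)).
Proof.
  unfold cr. simpl rising. rewrite fact_simpl, mult_INR.
  pose proof (INR_fact_pos n). assert (0 < INR (S n)) by (apply lt_0_INR; lia).
  field. lra.
Qed.

Lemma cr_series (r rho : R) : 0 <= r -> 0 <= rho < 1 ->
  ex_series (fun n => cr r n * rho ^ n) /\ ex_series (fun n => cr r n * rho ^ n * INR n).
Proof.
  intros Hr Hrho.
  set (th := (1 + rho) / 2).
  destruct (exists_big (2 * r * rho / (1 - rho) + 1)) as [n0 Hn0].
  assert (Hkey : forall n, (n0 <= n)%nat -> (r + INR n) * rho <= th * INR n /\ 1 <= INR n).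
  { intros n Hn. apply le_INR in Hn.
    assert (2 * r * rho / (1 - rho) * (1 - rho) = 2 * r * rho) by (field; lra).
    assert (0 <= 2 * r * rho / (1 - rho)).
    { apply Rdiv_le_0_compat; nra. }
    split; unfold th; nra. }
  split.
  - apply (ex_series_ratio _ th n0).
    + intros n; apply Rmult_le_pos. apply cr_nonneg; auto. apply pow_le; lra.
    + unfold th; lra.
    + intros n Hn. rewrite cr_S. simpl pow. destruct (Hkey n Hn) as [H1 H2].
      rewrite S_INR.
      assert (0 <= cr r n * rho ^ n) by (apply Rmult_le_pos; [apply cr_nonneg; auto| apply pow_le; lra]).
      assert ((r + INR n) / (INR n + 1) * rho <= th).
      { apply (Rmult_le_reg_r (INR n + 1)). lra.
        replace ((r + INR n) / (INR n + 1) * rho * (INR n + 1)) with ((r + INR n) * rho) by (field; lra).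
        unfold th in *; nra. }
      replace (cr r n * ((r + INR n) / (INR n + 1)) * (rho * rho ^ n))
        with ((cr r n * rho ^ n) * ((r + INR n) / (INR n + 1) * rho)) by ring.
      rewrite (Rmult_comm th). apply Rmult_le_compat_l; auto.
  - apply (ex_series_ratio _ th n0).
    + intros n; apply Rmult_le_pos. apply Rmult_le_pos. apply cr_nonneg; auto. apply pow_le; lra. apply pos_INR.
    + unfold th; lra.
    + intros n Hn. rewrite cr_S. simpl pow. destruct (Hkey n Hn) as [H1 H2].
      rewrite S_INR.
      assert (0 <= cr r n * rho ^ n) by (apply Rmult_le_pos; [apply cr_nonneg; auto| apply pow_le; lra]).
      replace (cr r n * ((r + INR n) / (INR n + 1)) * (rho * rho ^ n) * (INR n + 1))
        with ((cr r n * rho ^ n) * ((r + INR n) * rho)) by (field; lra).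
      replace (th * (cr r n * rho ^ n * INR n)) with ((cr r n * rho ^ n) * (th * INR n)) by ring.
      apply Rmult_le_compat_l; auto.
Qed.

Section NB.
Variable p : R.
Hypothesis Hp : 0 < p < 1.

Lemma Rpower_pos r : 0 < Rpower p r.
Proof. unfold Rpower; apply exp_pos. Qed.

Lemma pmf_eq r n : nb_pmf r p n = Rpower p r * (cr r n * (1 - p) ^ n).
Proof. unfold nb_pmf, cr; ring. Qed.

Lemma pmf_nonneg r n : 0 <= r -> 0 <= nb_pmf r p n.
Proof.
  intros; rewrite pmf_eq. apply Rmult_le_pos. left; apply Rpower_pos.
  apply Rmult_le_pos. apply cr_nonneg; auto. apply pow_le; lra.
Qed.

Lemma ex_abs_E r f u v : 0 <= r -> (forall n, Rabs (f n) <= u + v * INR n) ->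
  ex_series (fun n => Rabs (nb_pmf r p n * f n)).
Proof.
  intros Hr Hf.
  destruct (cr_series r (1 - p) Hr) as [H1 H2]. lra.
  apply (@ex_series_le R_AbsRing R_CompleteNormedModule _
     (fun n => (Rpower p r * u) * (cr r n * (1-p)^n) + (Rpower p r * v) * (cr r n * (1 - p) ^ n * INR n))).
  - intros n. change (norm (Rabs (nb_pmf r p n * f n))) with (Rabs (Rabs (nb_pmf r p n * f n))).
    rewrite Rabs_Rabsolu, Rabs_mult, (Rabs_pos_eq (nb_pmf r p n)) by (apply pmf_nonneg; auto).
    rewrite pmf_eq.
    assert (0 <= Rpower p r * (cr r n * (1 - p) ^ n)).
    { rewrite <- pmf_eq; apply pmf_nonneg; auto. }
    specialize (Hf n).
    replace (Rpower p r * u * (cr r n * (1 - p) ^ n) + Rpower p r * v * (cr r n * (1 - p) ^ n * INR n))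
      with (Rpower p r * (cr r n * (1 - p) ^ n) * (u + v * INR n)) by ring.
    apply Rmult_le_compat_l; auto.
  - apply (ex_series_plus (fun n => (Rpower p r * u) * (cr r n * (1-p)^n))
                         (fun n => (Rpower p r * v) * (cr r n * (1 - p) ^ n * INR n))).
    apply (ex_series_scal_l (Rpower p r * u) (fun n => (cr r n * (1-p)^n))); auto.
    apply (ex_series_scal_l (Rpower p r * v) (fun n => (cr r n * (1-p)^n * INR n))); auto.
Qed.

Lemma ex_E r f u v : 0 <= r -> (forall n, Rabs (f n) <= u + v * INR n) ->
  ex_series (fun n => nb_pmf r p n * f n).
Proof. intros; apply ex_series_Rabs; eapply ex_abs_E; eauto. Qed.

Lemma rising_S_shift r m : rising r (S m) = r * rising (r + 1) m.
Proof.
  induction m. simpl; ring.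
  change (rising r (S (S m))) with (rising r (S m) * (r + INR (S m))).
  rewrite IHm. simpl rising. rewrite !S_INR. destruct m; simpl; ring.
Qed.

Lemma cr_conv r m : cr (r + 1) m = sum_f_R0 (cr r) m.
Proof.
  induction m. unfold cr; simpl; field.
  simpl sum_f_R0. rewrite <- IHm.
  rewrite cr_S. unfold cr. rewrite rising_S_shift. rewrite fact_simpl, mult_INR.
  pose proof (INR_fact_pos m). assert (0 < INR (S m)) by (apply lt_0_INR; lia).
  rewrite S_INR in *. field. lra.
Qed.

Lemma rising_1 j : rising 1 j = INR (fact j).
Proof.
  induction j. reflexivity. simpl rising. rewrite IHj, fact_simpl, mult_INR, S_INR. ring.
Qed.

Lemma pmf1 j : nb_pmf 1 p j = p * (1 - p) ^ j.
Proof.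
  unfold nb_pmf. rewrite rising_1, Rpower_1 by lra. pose proof (INR_fact_pos j). field. lra.
Qed.

Lemma pmf_conv r m : nb_pmf (r + 1) p m = sum_f_R0 (fun n => nb_pmf r p n * nb_pmf 1 p (m - n)) m.
Proof.
  rewrite pmf_eq, cr_conv, Rpower_plus, Rpower_1 by lra.
  rewrite (sum_eq (fun n => nb_pmf r p n * nb_pmf 1 p (m - n)) (fun n => cr r n * (Rpower p r * p * (1-p) ^ m))).
  - rewrite <- scal_sum. ring.
  - intros n Hn. rewrite pmf_eq, pmf1.
    replace m with (n + (m - n))%nat at 2 by lia. rewrite pow_add. ring.
Qed.

Lemma cauchy_E r f g u v : 0 <= r -> (forall n, Rabs (f n) <= u + v * INR n) ->
  (forall n, Rabs (g n) <= u + v * INR n) ->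
  is_series (fun m => sum_f_R0 (fun n => (nb_pmf r p n * f n) * (nb_pmf 1 p (m - n) * g (m - n)%nat)) m)
    (E_nb r p f * E_nb 1 p g).
Proof.
  intros Hr Hf Hg.
  apply (is_series_mult (fun n => nb_pmf r p n * f n) (fun n => nb_pmf 1 p n * g n)).
  - apply Series_correct. eapply ex_E; eauto.
  - apply Series_correct. eapply ex_E; eauto. lra.
  - eapply ex_abs_E; eauto.
  - eapply ex_abs_E; eauto. lra.
Qed.

Lemma E1_one : E_nb 1 p (fun _ => 1) = 1.
Proof.
  unfold E_nb. rewrite (Series_ext _ (fun n => p * (1 - p) ^ n)) by (intros; rewrite pmf1; ring).
  rewrite Series_scal_l, Series_geom. field; lra. rewrite Rabs_pos_eq; lra.
Qed.

Lemma nonincr_le (f : nat -> R) : (forall n, f (S n) <= f n) -> forall n m, (n <= m)%nat -> f m <= f n.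
Proof.
  intros H n m Hnm. induction Hnm. lra. eapply Rle_trans; eauto.
Qed.

Lemma SM r f B : 0 <= r -> (forall n, f (S n) <= f n) -> (forall n, Rabs (f n) <= B) ->
  E_nb (r + 1) p f <= E_nb r p f.
Proof.
  intros Hr Hmon HB.
  assert (HB' : forall n, Rabs (f n) <= B + 0 * INR n) by (intros; rewrite Rmult_0_l, Rplus_0_r; auto).
  assert (H1 : forall n, Rabs ((fun _ => 1) n) <= (Rabs B + 1) + 0 * INR n).
  { intros; rewrite Rabs_R1. pose proof (Rabs_pos B); lra. }
  assert (HB2 : forall n, Rabs (f n) <= (Rabs B + 1) + 0 * INR n).
  { intros; specialize (HB n). pose proof (Rle_abs B). lra. }
  pose proof (cauchy_E r f (fun _ => 1) (Rabs B + 1) 0 Hr HB2 H1) as Hc.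
  rewrite E1_one, Rmult_1_r in Hc.
  unfold E_nb at 1.
  rewrite <- (is_series_unique _ _ Hc).
  apply Series_le_gen.
  - eapply ex_E. lra. eauto.
  - eexists; eauto.
  - intros m. rewrite pmf_conv. rewrite Rmult_comm, scal_sum.
    apply sum_Rle. intros n Hn.
    assert (0 <= nb_pmf r p n) by (apply pmf_nonneg; auto).
    assert (0 <= nb_pmf 1 p (m - n)) by (apply pmf_nonneg; lra).
    pose proof (nonincr_le f Hmon n m Hn).
    replace (nb_pmf r p n * f n * (nb_pmf 1 p (m - n) * 1)) with (nb_pmf r p n * nb_pmf 1 p (m - n) * f n) by ring.
    apply Rmult_le_compat_l; auto. apply Rmult_le_pos; auto.
Qed.

Definition Mr r := E_nb r p (fun _ => 1).
Definition Er r := E_nb r p INR.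

Lemma M_S r : 0 <= r -> Mr (r + 1) = Mr r.
Proof.
  intros Hr.
  assert (H1 : forall n, Rabs ((fun _ => 1) n) <= 1 + 0 * INR n) by (intros; rewrite Rabs_R1; lra).
  pose proof (cauchy_E r (fun _ => 1) (fun _ => 1) 1 0 Hr H1 H1) as Hc.
  rewrite E1_one, Rmult_1_r in Hc. fold (Mr r) in Hc.
  unfold Mr at 1, E_nb. rewrite <- (is_series_unique _ _ Hc).
  apply Series_ext. intros m. rewrite pmf_conv, Rmult_1_r. apply sum_eq. intros; ring.
Qed.

Lemma E_S r : 0 <= r -> Er (r + 1) = Er r + Mr r * Er 1.
Proof.
  intros Hr.
  assert (H1 : forall n, Rabs ((fun _ => 1) n) <= 1 + 1 * INR n) by (intros; rewrite Rabs_R1; pose proof (pos_INR n); lra).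
  assert (H2 : forall n, Rabs (INR n) <= 1 + 1 * INR n) by (intros; rewrite Rabs_pos_eq by apply pos_INR; lra).
  pose proof (cauchy_E r INR (fun _ => 1) 1 1 Hr H2 H1) as Hc1.
  pose proof (cauchy_E r (fun _ => 1) INR 1 1 Hr H1 H2) as Hc2.
  rewrite E1_one, Rmult_1_r in Hc1. fold (Er r) (Mr r) (Er 1) in Hc1, Hc2.
  rewrite <- (is_series_unique _ _ Hc1), <- (is_series_unique _ _ Hc2).
  rewrite <- Series_plus by (eexists; eauto).
  unfold Er at 1, E_nb. apply Series_ext. intros m. rewrite pmf_conv.
  rewrite <- sum_plus. rewrite Rmult_comm, scal_sum. apply sum_eq. intros n Hn.
  rewrite (minus_INR m n Hn). ring.
Qed.

Lemma M_iter r j : 0 <= r -> Mr (r + INR j) = Mr r.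
Proof.
  intros Hr; induction j. simpl; rewrite Rplus_0_r; auto.
  rewrite S_INR, <- Rplus_assoc, M_S; auto. pose proof (pos_INR j); lra.
Qed.

Lemma E_iter r j : 0 <= r -> Er (r + INR j) = Er r + INR j * (Mr r * Er 1).
Proof.
  intros Hr; induction j. simpl; rewrite Rplus_0_r; ring.
  rewrite S_INR, <- Rplus_assoc, E_S, IHj, M_iter; auto. ring. pose proof (pos_INR j); lra.
Qed.

Lemma SM_iter r j f B : 0 <= r -> (forall n, f (S n) <= f n) -> (forall n, Rabs (f n) <= B) ->
  E_nb (r + INR j) p f <= E_nb r p f.
Proof.
  intros Hr Hm HB; induction j. simpl; rewrite Rplus_0_r; lra.
  rewrite S_INR, <- Rplus_assoc. eapply Rle_trans; [|apply IHj].
  apply (SM _ f B); auto. pose proof (pos_INR j); lra.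
Qed.


End NB.

Lemma inf_ge_ext x F F' : (forall a, F a = F' a) -> inf_ge x F = inf_ge x F'.
Proof.
  intros H; unfold inf_ge. f_equal. apply Glb_Rbar_eqset.
  intros y; split; intros [a [Ha Hy]]; exists a; split; auto; rewrite Hy, H; auto.
Qed.

Lemma inf_ge_min x F : (forall a, (x <= a)%Z -> F x <= F a) -> inf_ge x F = F x.
Proof.
  intros H; unfold inf_ge.
  rewrite (is_glb_Rbar_unique _ (Finite (F x))). reflexivity.
  split.
  - intros y [a [Ha Hy]]; subst; simpl; apply H; auto.
  - intros b Hb. apply Hb. exists x; split; auto; lia.
Qed.

Lemma inf_ge_skip x F : F (x + 1)%Z < F x -> inf_ge x F = inf_ge (x + 1)%Z F.
Proof.
  intros H; unfold inf_ge. f_equal.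
  apply is_glb_Rbar_unique.
  pose proof (Glb_Rbar_correct (fun y => exists a : Z, (x + 1 <= a)%Z /\ y = F a)) as [Hl Hg].
  split.
  - intros y [a [Ha Hy]]. subst.
    destruct (Z.eq_dec a x).
    + subst. apply Rbar_le_trans with (Finite (F (x+1)%Z)).
      apply Hl. exists (x+1)%Z; split; auto; lia. simpl; lra.
    + apply Hl. exists a; split; auto; lia.
  - intros b Hb. apply Hg. intros y [a [Ha Hy]]. apply Hb. exists a; split; auto; lia.
Qed.

Lemma inf_ge_bounds x F b : (forall a, (x <= a)%Z -> b <= F a) ->
  Glb_Rbar (fun y => exists a : Z, (x <= a)%Z /\ y = F a) = Finite (inf_ge x F) /\
  b <= inf_ge x F <= F x.
Proof.
  intros H.
  pose proof (Glb_Rbar_correct (fun y => exists a : Z, (x <= a)%Z /\ y = F a)) as [Hl Hg].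
  assert (H1 : Rbar_le (Finite b) (Glb_Rbar (fun y => exists a : Z, (x <= a)%Z /\ y = F a))).
  { apply Hg. intros y [a [Ha Hy]]; subst; simpl; apply H; auto. }
  assert (H2 : Rbar_le (Glb_Rbar (fun y => exists a : Z, (x <= a)%Z /\ y = F a)) (Finite (F x))).
  { apply Hl. exists x; split; auto; lia. }
  unfold inf_ge.
  destruct (Glb_Rbar (fun y => exists a : Z, (x <= a)%Z /\ y = F a)); simpl in *; try contradiction.
  split; auto.
Qed.

Lemma inf_ge_shift x F c b : (forall a, (x <= a)%Z -> b <= F a) ->
  inf_ge x (fun a => F a + c) = inf_ge x F + c.
Proof.
  intros H.
  destruct (inf_ge_bounds x F b H) as [Heq _].
  unfold inf_ge at 1. rewrite (is_glb_Rbar_unique _ (Finite (inf_ge x F + c))). reflexivity.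
  pose proof (Glb_Rbar_correct (fun y => exists a : Z, (x <= a)%Z /\ y = F a)) as [Hl Hg].
  rewrite Heq in Hl, Hg.
  split.
  - intros y [a [Ha Hy]]; subst. simpl.
    assert (Rbar_le (Finite (inf_ge x F)) (Finite (F a))) by (apply Hl; exists a; auto).
    simpl in H0; lra.
  - intros bb Hb.
    assert (Hb' : is_lb_Rbar (fun y => exists a : Z, (x <= a)%Z /\ y = F a) (Rbar_minus bb (Finite c))).
    { intros y [a [Ha Hy]]; subst.
      assert (Rbar_le bb (Finite (F a + c))) by (apply Hb; exists a; auto).
      destruct bb; simpl in *; try contradiction; auto; lra. }
    apply Hg in Hb'. destruct bb; simpl in *; auto; lra.
Qed.

Lemma convex_min (F : Z -> R) x :
  (forall a, F (a + 1)%Z - F a <= F (a + 1 + 1)%Z - F (a + 1)%Z) ->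
  0 <= F (x + 1)%Z - F x -> forall a, (x <= a)%Z -> F x <= F a.
Proof.
  intros Hc H0 a Ha.
  assert (Hd : forall m : nat, 0 <= F (x + Z.of_nat m + 1)%Z - F (x + Z.of_nat m)%Z).
  { induction m. simpl. rewrite Z.add_0_r. auto.
    replace (x + Z.of_nat (S m))%Z with (x + Z.of_nat m + 1)%Z by lia.
    specialize (Hc (x + Z.of_nat m)%Z). lra. }
  assert (Hm : forall m : nat, F x <= F (x + Z.of_nat m)%Z).
  { induction m. simpl. rewrite Z.add_0_r; lra.
    replace (x + Z.of_nat (S m))%Z with (x + Z.of_nat m + 1)%Z by lia.
    specialize (Hd m). lra. }
  replace a with (x + Z.of_nat (Z.to_nat (a - x)))%Z by lia. apply Hm.
Qed.

Definition LB (f : nat -> R) := exists u v, forall n, Rabs (f n) <= u + v * INR n.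

Lemma LB_const c : LB (fun _ => c).
Proof. exists (Rabs c), 0. intros; lra. Qed.

Lemma LB_plus f g : LB f -> LB g -> LB (fun n => f n + g n).
Proof.
  intros [u1 [v1 H1]] [u2 [v2 H2]]. exists (u1 + u2), (v1 + v2). intros n.
  eapply Rle_trans. apply Rabs_triang. specialize (H1 n); specialize (H2 n). lra.
Qed.

Lemma LB_scal c f : LB f -> LB (fun n => c * f n).
Proof.
  intros [u [v H]]. exists (Rabs c * u), (Rabs c * v). intros n.
  rewrite Rabs_mult. specialize (H n). pose proof (Rabs_pos c).
  replace (Rabs c * u + Rabs c * v * INR n) with (Rabs c * (u + v * INR n)) by ring.
  apply Rmult_le_compat_l; auto.
Qed.

Lemma LB_minus f g : LB f -> LB g -> LB (fun n => f n - g n).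
Proof.
  intros Hf Hg. apply (LB_plus f (fun n => -1 * g n)) in Hf. 2: apply LB_scal; auto.
  destruct Hf as [u [v H]]. exists u, v. intros n. specialize (H n).
  replace (f n - g n) with (f n + -1 * g n) by ring. auto.
Qed.

Lemma LB_le f g : LB g -> (forall n, Rabs (f n) <= Rabs (g n)) -> LB f.
Proof. intros [u [v H]] Hfg. exists u, v. intros n. eapply Rle_trans; eauto. Qed.

Lemma LB_id : LB INR.
Proof. exists 0, 1. intros; rewrite Rabs_pos_eq by apply pos_INR; lra. Qed.

Section E.
Variable p : R.
Hypothesis Hp : 0 < p < 1.

Lemma exE r f : 0 <= r -> LB f -> ex_series (fun n => nb_pmf r p n * f n).
Proof. intros Hr [u [v H]]. eapply ex_E; eauto. Qed.

Lemma E_plus r f g : 0 <= r -> LB f -> LB g ->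
  E_nb r p (fun n => f n + g n) = E_nb r p f + E_nb r p g.
Proof.
  intros Hr Hf Hg. unfold E_nb. rewrite <- Series_plus by (apply exE; auto).
  apply Series_ext; intros; ring.
Qed.

Lemma E_scal r c f : E_nb r p (fun n => c * f n) = c * E_nb r p f.
Proof.
  unfold E_nb. rewrite <- Series_scal_l. apply Series_ext; intros; ring.
Qed.

Lemma E_minus r f g : 0 <= r -> LB f -> LB g ->
  E_nb r p (fun n => f n - g n) = E_nb r p f - E_nb r p g.
Proof.
  intros Hr Hf Hg. unfold E_nb. rewrite <- Series_minus by (apply exE; auto).
  apply Series_ext; intros; ring.
Qed.

Lemma E_ext r f g : (forall n, f n = g n) -> E_nb r p f = E_nb r p g.
Proof. intros H; unfold E_nb; apply Series_ext; intros; rewrite H; auto. Qed.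

Lemma E_mono r f g : 0 <= r -> LB f -> LB g -> (forall n, f n <= g n) -> E_nb r p f <= E_nb r p g.
Proof.
  intros Hr Hf Hg H. apply Series_le_gen; try (apply exE; auto).
  intros n. apply Rmult_le_compat_l. apply pmf_nonneg; auto. auto.
Qed.

Lemma E_lin r u v : 0 <= r -> E_nb r p (fun n => u + v * INR n) = u * Mr p r + v * Er p r.
Proof.
  intros Hr. rewrite E_plus; auto. 2: apply LB_const. 2: apply LB_scal, LB_id.
  unfold Mr, Er. rewrite <- !E_scal. f_equal. apply E_ext; intros; ring.
Qed.

Lemma E_zero r : E_nb r p (fun _ => 0) = 0.
Proof.
  rewrite (E_ext r _ (fun n => 0 * 1)) by (intros; ring). rewrite E_scal. ring.
Qed.

Lemma E_nonneg r f : 0 <= r -> LB f -> (forall n, 0 <= f n) -> 0 <= E_nb r p f.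
Proof.
  intros Hr Hf H. rewrite <- (E_zero r). apply E_mono; auto. apply LB_const.
Qed.

Lemma Mr_nonneg r : 0 <= r -> 0 <= Mr p r.
Proof. intros; unfold Mr; apply E_nonneg; auto. apply LB_const. intros; lra. Qed.

Lemma Er_nonneg r : 0 <= r -> 0 <= Er p r.
Proof. intros; unfold Er; apply E_nonneg; auto. apply LB_id. intros; apply pos_INR. Qed.

Lemma SM_gen r r' f b : 0 <= r -> (exists j, r' = r + INR j) ->
  (forall n, f (S n) <= f n) -> (forall n, b <= f n) -> E_nb r' p f <= E_nb r p f.
Proof.
  intros Hr [j ->] Hm Hb.
  apply (SM_iter p Hp r j f (Rabs (f 0%nat) + Rabs b)); auto.
  intros n. pose proof (nonincr_le f Hm 0 n (Nat.le_0_l n)). specialize (Hb n).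
  unfold Rabs at 1; destruct (Rcase_abs (f n)); pose proof (Rle_abs b); pose proof (Rle_abs (f 0%nat));
  pose proof (Rabs_pos b); pose proof (Rabs_pos (f 0%nat)); unfold Rabs in *;
  destruct (Rcase_abs b), (Rcase_abs (f 0%nat)); lra.
Qed.

End E.

Ltac dRle := repeat match goal with |- context [Rle_dec ?x ?y] => destruct (Rle_dec x y) end.

Definition ind (a : Z) (n : nat) : R := if Z.leb (Z.of_nat n) a then 1 else 0.

Lemma pos_nonneg y : 0 <= Defs.pos y.
Proof. unfold Defs.pos, Rmax; destruct (Rle_dec y 0); lra. Qed.

Lemma pos_le y : Defs.pos y <= Rabs y.
Proof. unfold Defs.pos, Rmax; destruct (Rle_dec y 0). apply Rabs_pos. apply Rle_abs. Qed.

Lemma ind_01 a n : 0 <= ind a n <= 1.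
Proof. unfold ind; destruct (Z.leb _ _); lra. Qed.

Lemma pos_diff1 a n : Defs.pos (IZR (a + 1) - INR n) - Defs.pos (IZR a - INR n) = ind a n.
Proof.
  unfold ind, Defs.pos, Rmax. rewrite plus_IZR, INR_IZR_INZ.
  destruct (Z.leb_spec (Z.of_nat n) a) as [H|H];
    [apply IZR_le in H | assert (H' : (a + 1 <= Z.of_nat n)%Z) by lia; apply IZR_le in H'; rewrite plus_IZR in H'];
  dRle; lra.
Qed.

Lemma pos_diff2 a n : Defs.pos (INR n - IZR (a + 1)) - Defs.pos (INR n - IZR a) = - (1 - ind a n).
Proof.
  unfold ind, Defs.pos, Rmax. rewrite plus_IZR, INR_IZR_INZ.
  destruct (Z.leb_spec (Z.of_nat n) a) as [H|H];
    [apply IZR_le in H | assert (H' : (a + 1 <= Z.of_nat n)%Z) by lia; apply IZR_le in H'; rewrite plus_IZR in H'];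
  dRle; lra.
Qed.

Lemma ind_S a n : ind a (S n) <= ind a n.
Proof.
  unfold ind. destruct (Z.leb_spec (Z.of_nat (S n)) a), (Z.leb_spec (Z.of_nat n) a); try lra. lia.
Qed.

Lemma ind_a a n : ind a n <= ind (a + 1) n.
Proof.
  unfold ind. destruct (Z.leb_spec (Z.of_nat n) a), (Z.leb_spec (Z.of_nat n) (a+1)); try lra. lia.
Qed.

Lemma abs_IZR_sub a n : Rabs (IZR (a - Z.of_nat n)) <= Rabs (IZR a) + INR n.
Proof.
  rewrite minus_IZR, <- INR_IZR_INZ. eapply Rle_trans. apply Rabs_triang.
  rewrite Rabs_Ropp, (Rabs_pos_eq (INR n)) by apply pos_INR. lra.
Qed.

Lemma LB_ext f g : LB f -> (forall n, g n = f n) -> LB g.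
Proof. intros H E. apply (LB_le g f H). intros; rewrite E; lra. Qed.

Section Step.
Variables (p cv ch cb r0 s0 A B : R) (d : nat) (rz rk : nat -> R) (W : Z -> nat -> R).
Hypotheses (Hp : 0 < p < 1) (Hcv : 0 < cv) (Hch : 0 < ch) (Hcb : 0 < cb)
  (Hr0 : 0 <= r0) (Hs0 : 0 <= s0) (HA : 0 <= A) (HB : 0 <= B)
  (Hrz : forall k, rz k = r0 + INR k) (Hrk : forall k, rk k = s0 + INR (d * k)).

Definition DW x k := W (x + 1)%Z k - W x k.

Hypotheses (HW0 : forall x k, 0 <= W x k)
  (HWg : forall x k, W x k <= A + B * (Rabs (IZR x) + INR k))
  (HWc : forall x k, DW x k <= DW (x + 1)%Z k)
  (HWk : forall x k1 k2, (k1 <= k2)%nat -> DW x k2 <= DW x k1)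
  (HWl : forall x k, - cv <= DW x k).

Lemma rz_nn k : 0 <= rz k.
Proof. rewrite Hrz; pose proof (pos_INR k); lra. Qed.
Lemma rk_nn k : 0 <= rk k.
Proof. rewrite Hrk; pose proof (pos_INR (d * k)); lra. Qed.

Let Mz := Mr p r0.
Let Ms := Mr p s0.
Let E1 := Er p 1.
Let Ez0 := Er p r0.
Let Es0 := Er p s0.

Lemma Mz_eq k : Mr p (rz k) = Mz.
Proof. rewrite Hrz. apply M_iter; auto. Qed.
Lemma Ms_eq k : Mr p (rk k) = Ms.
Proof. rewrite Hrk. apply M_iter; auto. Qed.
Lemma Ez_eq k : Er p (rz k) = Ez0 + INR k * (Mz * E1).
Proof. rewrite Hrz. apply E_iter; auto. Qed.
Lemma Es_eq k : Er p (rk k) = Es0 + INR (d * k) * (Ms * E1).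
Proof. rewrite Hrk. apply E_iter; auto. Qed.

Lemma consts_nn : 0 <= Mz /\ 0 <= Ms /\ 0 <= E1 /\ 0 <= Ez0 /\ 0 <= Es0.
Proof.
  unfold Mz, Ms, E1, Ez0, Es0. repeat split; try apply Mr_nonneg; try apply Er_nonneg; auto; lra.
Qed.

Lemma LB_W y j : LB (fun l => W y (j + l)%nat).
Proof.
  exists (A + B * (Rabs (IZR y) + INR j)), B. intros l.
  rewrite Rabs_pos_eq by auto. eapply Rle_trans. apply HWg. rewrite plus_INR. lra.
Qed.

Lemma LB_DWl y j : LB (fun l => DW y (j + l)%nat).
Proof. apply (LB_minus (fun l => W (y+1)%Z (j + l)%nat) (fun l => W y (j + l)%nat)); apply LB_W. Qed.

Lemma inner_bounds y j k :
  0 <= E_nb (rk k) p (fun l => W y (j + l)%nat) <=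
  (A + B * (Rabs (IZR y) + INR j)) * Ms + B * Er p (rk k).
Proof.
  split.
  - apply E_nonneg; auto. apply rk_nn. apply LB_W.
  - rewrite <- (Ms_eq k). rewrite <- E_lin; auto. 2: apply rk_nn.
    apply E_mono; auto. apply rk_nn. apply LB_W. apply LB_plus. apply LB_const. apply LB_scal, LB_id.
    intros l. eapply Rle_trans. apply HWg. rewrite plus_INR. lra.
Qed.

Definition O a k n := E_nb (rk k) p (fun l => W (a - Z.of_nat n)%Z (k + n + l)%nat).

Lemma LB_O a k : LB (O a k).
Proof.
  destruct consts_nn as (HMz & HMs & HE1 & HEz & HEs).
  exists ((A + B * (Rabs (IZR a) + INR k)) * Ms + B * Er p (rk k)), (2 * B * Ms).
  intros n. unfold O. destruct (inner_bounds (a - Z.of_nat n)%Z (k + n)%nat k) as [H1 H2].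
  rewrite Rabs_pos_eq by auto. eapply Rle_trans. apply H2.
  pose proof (abs_IZR_sub a n). rewrite plus_INR.
  assert (B * Rabs (IZR (a - Z.of_nat n)) * Ms <= B * (Rabs (IZR a) + INR n) * Ms).
  { apply Rmult_le_compat_r; auto. apply Rmult_le_compat_l; auto. }
  nra.
Qed.

Lemma O_diff a k n : O (a + 1)%Z k n - O a k n = E_nb (rk k) p (fun l => DW (a - Z.of_nat n)%Z (k + n + l)%nat).
Proof.
  unfold O. rewrite <- E_minus; auto. 2: apply rk_nn. 2,3: apply (LB_W _ (k+n)%nat).
  apply E_ext. intros l. unfold DW. replace (a + 1 - Z.of_nat n)%Z with (a - Z.of_nat n + 1)%Z by lia. reflexivity.
Qed.

Definition Phi k a n := ch * ind a n - cb * (1 - ind a n) +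
  E_nb (rk k) p (fun l => DW (a - Z.of_nat n)%Z (k + n + l)%nat).

Lemma LB_ind a : LB (ind a).
Proof. exists 1, 0. intros n. destruct (ind_01 a n). rewrite Rabs_pos_eq; lra. Qed.

Lemma LB_Phi k a : LB (Phi k a).
Proof.
  apply LB_plus. apply LB_minus. apply LB_scal, LB_ind.
  apply LB_scal. apply LB_minus. apply LB_const. apply LB_ind.
  apply (LB_ext (fun n => O (a+1)%Z k n - O a k n)). apply LB_minus; apply LB_O.
  intros n; rewrite O_diff; auto.
Qed.

Lemma LB_pos1 a : LB (fun n => Defs.pos (IZR a - INR n)).
Proof.
  exists (Rabs (IZR a)), 0. intros n. rewrite Rabs_pos_eq by apply pos_nonneg.
  unfold Defs.pos, Rmax. dRle. pose proof (Rabs_pos (IZR a)); lra.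
  pose proof (Rle_abs (IZR a)); pose proof (pos_INR n); lra.
Qed.

Lemma LB_pos2 a : LB (fun n => Defs.pos (INR n - IZR a)).
Proof.
  exists (Rabs (IZR a)), 1. intros n. rewrite Rabs_pos_eq by apply pos_nonneg.
  unfold Defs.pos, Rmax. dRle. pose proof (Rabs_pos (IZR a)); pose proof (pos_INR n); lra.
  pose proof (Rle_abs (- IZR a)); rewrite Rabs_Ropp in *; lra.
Qed.

Definition G a k := cv * IZR a + ch * E_nb (rz k) p (fun n => Defs.pos (IZR a - INR n))
  + cb * E_nb (rz k) p (fun n => Defs.pos (INR n - IZR a))
  + E_nb2 (rz k) (rk k) p (fun n l => W (a - Z.of_nat n)%Z (k + n + l)%nat).

Definition DG a k := G (a + 1)%Z k - G a k.

Lemma DG_eq a k : DG a k = cv + E_nb (rz k) p (Phi k a).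
Proof.
  assert (Hr := rz_nn k).
  unfold DG, G.
  change (E_nb2 (rz k) (rk k) p (fun n l => W (a + 1 - Z.of_nat n)%Z (k + n + l)%nat)) with (E_nb (rz k) p (O (a+1)%Z k)).
  change (E_nb2 (rz k) (rk k) p (fun n l => W (a - Z.of_nat n)%Z (k + n + l)%nat)) with (E_nb (rz k) p (O a k)).
  assert (H1 : E_nb (rz k) p (fun n => Defs.pos (IZR (a + 1) - INR n)) - E_nb (rz k) p (fun n => Defs.pos (IZR a - INR n))
     = E_nb (rz k) p (ind a)).
  { rewrite <- E_minus; auto; try apply LB_pos1. apply E_ext; intros; apply pos_diff1. }
  assert (H2 : E_nb (rz k) p (fun n => Defs.pos (INR n - IZR (a + 1))) - E_nb (rz k) p (fun n => Defs.pos (INR n - IZR a))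
     = -1 * E_nb (rz k) p (fun n => 1 - ind a n)).
  { rewrite <- E_minus, <- E_scal; auto; try apply LB_pos2. apply E_ext; intros; rewrite pos_diff2; ring. }
  assert (H3 : E_nb (rz k) p (O (a + 1)%Z k) - E_nb (rz k) p (O a k) =
     E_nb (rz k) p (fun n => E_nb (rk k) p (fun l => DW (a - Z.of_nat n)%Z (k + n + l)%nat))).
  { rewrite <- E_minus; auto; try apply LB_O. apply E_ext; intros; apply O_diff. }
  assert (H4 : E_nb (rz k) p (Phi k a) = ch * E_nb (rz k) p (ind a) - cb * E_nb (rz k) p (fun n => 1 - ind a n)
     + E_nb (rz k) p (fun n => E_nb (rk k) p (fun l => DW (a - Z.of_nat n)%Z (k + n + l)%nat))).
  { unfold Phi. rewrite E_plus; auto.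
    2: apply LB_minus; [apply LB_scal, LB_ind | apply LB_scal, LB_minus; [apply LB_const | apply LB_ind]].
    2: apply (LB_ext (fun n => O (a+1)%Z k n - O a k n)); [apply LB_minus; apply LB_O | intros; rewrite O_diff; auto].
    rewrite E_minus; auto. 2: apply LB_scal, LB_ind. 2: apply LB_scal, LB_minus; [apply LB_const | apply LB_ind].
    rewrite !E_scal. reflexivity. }
  rewrite H4. assert (H0 : IZR (a + 1) = IZR a + 1) by apply plus_IZR. rewrite <- H1, <- H3. assert (H2p : E_nb (rz k) p (fun n => 1 - ind a n) = -(E_nb (rz k) p (fun n => Defs.pos (INR n - IZR (a + 1))) - E_nb (rz k) p (fun n => Defs.pos (INR n - IZR a)))) by lra. rewrite H2p, H0. ring.
Qed.


Lemma O_bound a k n : O a k n <= (A + B * (Rabs (IZR a) + INR k)) * Ms + B * Er p (rk k) + 2 * B * Ms * INR n.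
Proof.
  destruct consts_nn as (HMz & HMs & HE1 & HEz & HEs).
  unfold O. destruct (inner_bounds (a - Z.of_nat n)%Z (k + n)%nat k) as [H1 H2].
  eapply Rle_trans. apply H2.
  pose proof (abs_IZR_sub a n). rewrite plus_INR.
  assert (B * Rabs (IZR (a - Z.of_nat n)) * Ms <= B * (Rabs (IZR a) + INR n) * Ms).
  { apply Rmult_le_compat_r; auto. apply Rmult_le_compat_l; auto. }
  nra.
Qed.

Lemma O_nonneg a k n : 0 <= O a k n.
Proof. unfold O. apply (inner_bounds _ (k + n)%nat k). Qed.

Lemma Phi_k k1 k2 a n : (k1 <= k2)%nat -> Phi k2 a n <= Phi k1 a n.
Proof.
  intros Hk. unfold Phi. apply Rplus_le_compat_l.
  apply Rle_trans with (E_nb (rk k2) p (fun l => DW (a - Z.of_nat n)%Z (k1 + n + l)%nat)).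
  - apply E_mono; auto. apply rk_nn. apply (LB_DWl _ (k2 + n)%nat). apply (LB_DWl _ (k1 + n)%nat).
    intros l. apply HWk. lia.
  - apply (SM_gen p Hp (rk k1) (rk k2) _ (- cv)). apply rk_nn.
    + exists (d * (k2 - k1))%nat. rewrite !Hrk. rewrite Rplus_assoc, <- plus_INR. f_equal. f_equal. nia.
    + intros l. apply HWk. lia.
    + intros l. apply HWl.
Qed.

Lemma Phi_mono_n k a n : Phi k a (S n) <= Phi k a n.
Proof.
  unfold Phi. pose proof (ind_S a n). pose proof (ind_01 a n). pose proof (ind_01 a (S n)).
  assert (ch * ind a (S n) - cb * (1 - ind a (S n)) <= ch * ind a n - cb * (1 - ind a n)) by nra.
  apply Rplus_le_compat; auto.
  apply E_mono; auto. apply rk_nn. apply (LB_DWl _ (k + S n)%nat). apply (LB_DWl _ (k + n)%nat).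
  intros l. eapply Rle_trans. apply (HWk _ (k + n + l)%nat). lia.
  eapply Rle_trans. apply HWc. right. f_equal. lia.
Qed.

Lemma Phi_lower k a n : - cb - cv * Ms <= Phi k a n.
Proof.
  unfold Phi. pose proof (ind_01 a n).
  assert (- cb <= ch * ind a n - cb * (1 - ind a n)) by nra.
  assert (- cv * Ms <= E_nb (rk k) p (fun l => DW (a - Z.of_nat n)%Z (k + n + l)%nat)).
  { rewrite <- (Ms_eq k). unfold Mr. rewrite <- E_scal.
    apply E_mono; auto. apply rk_nn. apply LB_scal, LB_const. apply (LB_DWl _ (k + n)%nat).
    intros l. rewrite Rmult_1_r. apply HWl. }
  lra.
Qed.

Lemma DG_mono_k a k1 k2 : (k1 <= k2)%nat -> DG a k2 <= DG a k1.
Proof.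
  intros Hk. rewrite !DG_eq. apply Rplus_le_compat_l.
  apply Rle_trans with (E_nb (rz k2) p (Phi k1 a)).
  - apply E_mono; auto. apply rz_nn. apply LB_Phi. apply LB_Phi. intros n; apply Phi_k; auto.
  - apply (SM_gen p Hp (rz k1) (rz k2) _ (- cb - cv * Ms)). apply rz_nn.
    + exists (k2 - k1)%nat. rewrite !Hrz, Rplus_assoc, <- plus_INR. f_equal. f_equal. lia.
    + intros; apply Phi_mono_n.
    + intros; apply Phi_lower.
Qed.

Lemma DG_convex a k : DG a k <= DG (a + 1)%Z k.
Proof.
  rewrite !DG_eq. apply Rplus_le_compat_l.
  apply E_mono; auto. apply rz_nn. apply LB_Phi. apply LB_Phi.
  intros n. unfold Phi. pose proof (ind_a a n). pose proof (ind_01 a n). pose proof (ind_01 (a+1) n).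
  apply Rplus_le_compat. nra.
  apply E_mono; auto. apply rk_nn. apply (LB_DWl _ (k + n)%nat). apply (LB_DWl _ (k + n)%nat).
  intros l. eapply Rle_trans. apply HWc. right. f_equal. lia.
Qed.

Lemma G_lower a k : cv * IZR a <= G a k.
Proof.
  unfold G.
  change (E_nb2 (rz k) (rk k) p (fun n l => W (a - Z.of_nat n)%Z (k + n + l)%nat)) with (E_nb (rz k) p (O a k)).
  assert (0 <= E_nb (rz k) p (fun n => Defs.pos (IZR a - INR n))).
  { apply E_nonneg; auto. apply rz_nn. apply LB_pos1. intros; apply pos_nonneg. }
  assert (0 <= E_nb (rz k) p (fun n => Defs.pos (INR n - IZR a))).
  { apply E_nonneg; auto. apply rz_nn. apply LB_pos2. intros; apply pos_nonneg. }
  assert (0 <= E_nb (rz k) p (O a k)).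
  { apply E_nonneg; auto. apply rz_nn. apply LB_O. intros; apply O_nonneg. }
  assert (0 <= ch * E_nb (rz k) p (fun n => Defs.pos (IZR a - INR n))) by (apply Rmult_le_pos; lra).
  assert (0 <= cb * E_nb (rz k) p (fun n => Defs.pos (INR n - IZR a))) by (apply Rmult_le_pos; lra).
  lra.
Qed.

Lemma G_upper : exists A' B', 0 <= A' /\ 0 <= B' /\
  forall a k, G a k <= cv * IZR a + A' + B' * (Rabs (IZR a) + INR k).
Proof.
  destruct consts_nn as (HMz & HMs & HE1 & HEz & HEs).
  pose proof (pos_INR d) as HD.
  exists (cb * Ez0 + A * Ms * Mz + B * Es0 * Mz + 2 * B * Ms * Ez0).
  exists (ch * Mz + cb * Mz + cb * Mz * E1 + 2 * B * Ms * Mz + B * INR d * Ms * E1 * Mz + 2 * B * Ms * Mz * E1).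
  split. repeat apply Rplus_le_le_0_compat; repeat apply Rmult_le_pos; lra.
  split. repeat apply Rplus_le_le_0_compat; repeat apply Rmult_le_pos; lra.
  intros a k.
  set (X := Rabs (IZR a)). set (K := INR k).
  assert (HX : 0 <= X) by apply Rabs_pos. assert (HK : 0 <= K) by apply pos_INR.
  assert (Hr := rz_nn k).
  unfold G.
  change (E_nb2 (rz k) (rk k) p (fun n l => W (a - Z.of_nat n)%Z (k + n + l)%nat)) with (E_nb (rz k) p (O a k)).
  assert (H1 : E_nb (rz k) p (fun n => Defs.pos (IZR a - INR n)) <= X * Mz).
  { apply Rle_trans with (E_nb (rz k) p (fun n => X + 0 * INR n)).
    apply E_mono; auto. apply LB_pos1. apply LB_plus. apply LB_const. apply LB_scal, LB_id.
    intros n. unfold X, Defs.pos, Rmax. dRle; pose proof (pos_INR n); pose proof (Rle_abs (IZR a)); pose proof (Rabs_pos (IZR a)); lra.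
    rewrite E_lin, Mz_eq; auto. lra. }
  assert (H2 : E_nb (rz k) p (fun n => Defs.pos (INR n - IZR a)) <= X * Mz + (Ez0 + K * (Mz * E1))).
  { apply Rle_trans with (E_nb (rz k) p (fun n => X + 1 * INR n)).
    apply E_mono; auto. apply LB_pos2. apply LB_plus. apply LB_const. apply LB_scal, LB_id.
    intros n. unfold X, Defs.pos, Rmax. dRle; pose proof (pos_INR n); pose proof (Rle_abs (- IZR a)); rewrite Rabs_Ropp in *; pose proof (Rabs_pos (IZR a)); lra.
    rewrite E_lin, Mz_eq, Ez_eq; auto. fold K. lra. }
  assert (H3 : E_nb (rz k) p (O a k) <=
     ((A + B * (X + K)) * Ms + B * (Es0 + INR d * K * (Ms * E1))) * Mz + 2 * B * Ms * (Ez0 + K * (Mz * E1))).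
  { apply Rle_trans with (E_nb (rz k) p (fun n => ((A + B * (X + K)) * Ms + B * Er p (rk k)) + (2 * B * Ms) * INR n)).
    apply E_mono; auto. apply LB_O. apply LB_plus. apply LB_const. apply LB_scal, LB_id.
    intros n. apply O_bound.
    rewrite E_lin, Mz_eq, Ez_eq, Es_eq, mult_INR; auto. fold K. lra. }
  assert (Hc1 : ch * E_nb (rz k) p (fun n => Defs.pos (IZR a - INR n)) <= ch * (X * Mz)) by (apply Rmult_le_compat_l; lra).
  assert (Hc2 : cb * E_nb (rz k) p (fun n => Defs.pos (INR n - IZR a)) <= cb * (X * Mz + (Ez0 + K * (Mz * E1)))) by (apply Rmult_le_compat_l; lra).
  assert (Hpos : 0 <= (cb * Mz * E1 + B * Ms * Mz + B * INR d * Ms * E1 * Mz + 2 * B * Ms * Mz * E1) * X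
     + (ch * Mz + cb * Mz + B * Ms * Mz) * K).
  { apply Rplus_le_le_0_compat; apply Rmult_le_pos; auto; repeat apply Rplus_le_le_0_compat; repeat apply Rmult_le_pos; lra. }
  match goal with |- ?L <= ?R => assert (HR : R = cv * IZR a + (ch * (X * Mz) + cb * (X * Mz + (Ez0 + K * (Mz * E1)))
    + (((A + B * (X + K)) * Ms + B * (Es0 + INR d * K * (Ms * E1))) * Mz + 2 * B * Ms * (Ez0 + K * (Mz * E1))))
    + ((cb * Mz * E1 + B * Ms * Mz + B * INR d * Ms * E1 * Mz + 2 * B * Ms * Mz * E1) * X
     + (ch * Mz + cb * Mz + B * Ms * Mz) * K)) by ring end.
  rewrite HR. lra.
Qed.

Definition V x k := inf_ge x (fun a => G a k - cv * IZR x).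

Lemma V_bounds x k : 0 <= V x k <= G x k - cv * IZR x.
Proof.
  unfold V. refine (proj2 (inf_ge_bounds x (fun a => G a k - cv * IZR x) 0 _)). intros a Ha.
  pose proof (G_lower a k). apply IZR_le in Ha. nra.
Qed.

Lemma F_convex k c : forall a, (G (a + 1)%Z k - c) - (G a k - c) <= (G (a + 1 + 1)%Z k - c) - (G (a + 1)%Z k - c).
Proof. intros a. pose proof (DG_convex a k). unfold DG in H. lra. Qed.

Lemma V_min x k : 0 <= DG x k -> V x k = G x k - cv * IZR x.
Proof.
  intros H. unfold V. apply inf_ge_min. intros a Ha.
  apply (convex_min (fun a => G a k - cv * IZR x) x (F_convex k _)); auto. unfold DG in H; lra.
Qed.

Lemma DV_eq x k : V (x + 1)%Z k - V x k = Rmax (DG x k) 0 - cv.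
Proof.
  destruct (Rle_dec 0 (DG x k)) as [H|H].
  - rewrite Rmax_left by lra.
    assert (H2 : 0 <= DG (x+1)%Z k) by (pose proof (DG_convex x k); lra).
    rewrite (V_min x k H), (V_min (x+1)%Z k H2). rewrite plus_IZR. unfold DG. ring.
  - rewrite Rmax_right by lra.
    unfold V at 2. rewrite inf_ge_skip.
    2: unfold DG in H; lra.
    rewrite (inf_ge_ext (x + 1)%Z _ (fun a => (G a k - cv * IZR (x + 1)) + cv)).
    2: intros a; rewrite plus_IZR; ring.
    rewrite (inf_ge_shift _ _ _ 0). fold (V (x+1)%Z k). ring.
    intros a Ha. pose proof (G_lower a k). apply IZR_le in Ha. nra.
Qed.


Lemma step_all :
  (forall a k1 k2, (k1 <= k2)%nat -> G (a + 1)%Z k2 - G a k2 <= G (a + 1)%Z k1 - G a k1) /\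
  (forall x k, V x k = inf_ge x (fun a => G a k - cv * IZR x)) /\
  exists A' B', 0 <= A' /\ 0 <= B' /\ (forall x k, 0 <= V x k) /\
    (forall x k, V x k <= A' + B' * (Rabs (IZR x) + INR k)) /\
    (forall x k, V (x + 1)%Z k - V x k <= V (x + 1 + 1)%Z k - V (x + 1)%Z k) /\
    (forall x k1 k2, (k1 <= k2)%nat -> V (x + 1)%Z k2 - V x k2 <= V (x + 1)%Z k1 - V x k1) /\
    (forall x k, - cv <= V (x + 1)%Z k - V x k).
Proof.
  split. { intros; apply DG_mono_k; auto. }
  split. { reflexivity. }
  destruct G_upper as (A' & B' & HA' & HB' & HG).
  exists A', B'. split; auto. split; auto.
  split. { intros; apply V_bounds. }
  split. { intros x k. destruct (V_bounds x k). specialize (HG x k). lra. }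
  split. { intros x k. rewrite !DV_eq. pose proof (DG_convex x k).
           unfold Rmax; dRle; lra. }
  split. { intros x k1 k2 Hk. rewrite !DV_eq. pose proof (DG_mono_k x k1 k2 Hk).
           unfold Rmax; dRle; lra. }
  intros x k. rewrite DV_eq. unfold Rmax; dRle; lra.
Qed.

End Step.

Definition Inv (cv : R) (W : Z -> nat -> R) := exists A B, 0 <= A /\ 0 <= B /\ (forall x k, 0 <= W x k) /\
    (forall x k, W x k <= A + B * (Rabs (IZR x) + INR k)) /\
    (forall x k, W (x + 1)%Z k - W x k <= W (x + 1 + 1)%Z k - W (x + 1)%Z k) /\
    (forall x k1 k2, (k1 <= k2)%nat -> W (x + 1)%Z k2 - W x k2 <= W (x + 1)%Z k1 - W x k1) /\
    (forall x k, - cv <= W (x + 1)%Z k - W x k).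

Lemma Inv_ext cv W W' : (forall x k, W x k = W' x k) -> Inv cv W -> Inv cv W'.
Proof.
  intros E (A & B & H1 & H2 & H3 & H4 & H5 & H6 & H7).
  exists A, B. repeat split; auto; intros; rewrite <- !E; auto.
Qed.

Theorem proposition6 (N T : nat) (alpha0 beta0 : R) (cv ch cb : nat -> R) :
  (1 <= N)%nat -> (1 <= T)%nat -> 0 < alpha0 -> 0 < beta0 ->
  (forall i, (1 <= i <= N)%nat ->
     0 < cv i /\ 0 < ch i /\ 0 < cb i /\ cv i < cb i) ->
  forall t i, (t < T)%nat -> (1 <= i <= N)%nat ->
    (forall (a : Z) (k1 k2 : nat), (k1 <= k2)%nat ->
       Gt N T alpha0 beta0 cv ch cb i t (a + 1)%Z k2
         - Gt N T alpha0 beta0 cv ch cb i t a k2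
       <= Gt N T alpha0 beta0 cv ch cb i t (a + 1)%Z k1
         - Gt N T alpha0 beta0 cv ch cb i t a k1) /\
    (forall (x : Z) (k1 k2 : nat), (k1 <= k2)%nat ->
       Vt N T alpha0 beta0 cv ch cb i t (x + 1)%Z k2
         - Vt N T alpha0 beta0 cv ch cb i t x k2
       <= Vt N T alpha0 beta0 cv ch cb i t (x + 1)%Z k1
         - Vt N T alpha0 beta0 cv ch cb i t x k1).
Proof.
  intros HN HT Ha Hb Hc t i Ht Hi.
  destruct (Hc i Hi) as (Hcv & Hch & Hcb & _).
  assert (Hpt : forall t, 0 < p_t N beta0 t < 1).
  { intros s. unfold p_t. pose proof (pos_INR N); pose proof (pos_INR s).
    assert (0 <= INR N * INR s) by (apply Rmult_le_pos; auto).
    split. apply Rdiv_lt_0_compat; lra.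
    apply (Rmult_lt_reg_r (beta0 + INR N * INR s + 1)). lra.
    unfold Rdiv. rewrite Rmult_assoc, Rinv_l by lra. lra. }
  set (s0 := (INR N - 1) * alpha0).
  assert (HN1 : INR N - 1 = INR (N - 1)) by (rewrite minus_INR by lia; simpl; ring).
  assert (Hs0 : 0 <= s0). { unfold s0. rewrite HN1. apply Rmult_le_pos. apply pos_INR. lra. }
  assert (Hrz : forall k, rZ alpha0 k = alpha0 + INR k) by reflexivity.
  assert (Hrk : forall k, rK N alpha0 k = s0 + INR ((N - 1) * k)).
  { intros k. unfold rK, s0. rewrite mult_INR, <- HN1. ring. }
  assert (Hstep : forall m s, Inv (cv i) (Vaux N alpha0 beta0 cv ch cb i m (S s)) ->
     (forall a k1 k2, (k1 <= k2)%nat ->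
        G (p_t N beta0 s) (cv i) (ch i) (cb i) (rZ alpha0) (rK N alpha0) (Vaux N alpha0 beta0 cv ch cb i m (S s)) (a + 1)%Z k2
        - G (p_t N beta0 s) (cv i) (ch i) (cb i) (rZ alpha0) (rK N alpha0) (Vaux N alpha0 beta0 cv ch cb i m (S s)) a k2 <=
        G (p_t N beta0 s) (cv i) (ch i) (cb i) (rZ alpha0) (rK N alpha0) (Vaux N alpha0 beta0 cv ch cb i m (S s)) (a + 1)%Z k1
        - G (p_t N beta0 s) (cv i) (ch i) (cb i) (rZ alpha0) (rK N alpha0) (Vaux N alpha0 beta0 cv ch cb i m (S s)) a k1) /\
     Inv (cv i) (Vaux N alpha0 beta0 cv ch cb i (S m) s)).
  { intros m s (A & B & HA & HB & H0 & Hg & Hcx & Hk & Hl).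
    destruct (step_all (p_t N beta0 s) (cv i) (ch i) (cb i) alpha0 s0 A B (N - 1) (rZ alpha0) (rK N alpha0)
      (Vaux N alpha0 beta0 cv ch cb i m (S s)) (Hpt s) Hcv Hch Hcb ltac:(lra) Hs0 HA HB Hrz Hrk H0 Hg Hcx Hk Hl)
      as (HG & HV & A' & B' & HA' & HB' & V0 & Vg & Vc & Vk & Vl).
    split; auto.
    apply (Inv_ext _ (V (p_t N beta0 s) (cv i) (ch i) (cb i) (rZ alpha0) (rK N alpha0) (Vaux N alpha0 beta0 cv ch cb i m (S s)))).
    - intros x k. rewrite HV. simpl. apply inf_ge_ext. intros a. unfold Ccost, G.
      rewrite minus_IZR. ring.
    - exists A', B'. repeat split; auto. }
  assert (Hinv : forall m s, Inv (cv i) (Vaux N alpha0 beta0 cv ch cb i m s)).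
  { induction m; intros s.
    - exists 0, 0. simpl. repeat split; intros; try lra.
    - apply (Hstep m s (IHm (S s))). }
  destruct (Hstep (T - S t)%nat t (Hinv _ _)) as [HG HV].
  split.
  - intros a k1 k2 Hk. apply (HG a k1 k2 Hk).
  - unfold Vt. replace (T - t)%nat with (S (T - S t)) by lia.
    destruct (Hinv (T - S t)%nat (S t)) as (A & B & HA & HB & H0 & Hg & Hcx & Hk & Hl).
    destruct (step_all (p_t N beta0 t) (cv i) (ch i) (cb i) alpha0 s0 A B (N - 1) (rZ alpha0) (rK N alpha0)
      (Vaux N alpha0 beta0 cv ch cb i (T - S t) (S t)) (Hpt t) Hcv Hch Hcb ltac:(lra) Hs0 HA HB Hrz Hrk H0 Hg Hcx Hk Hl)
      as (_ & HVe & A' & B' & HA' & HB' & V0 & Vg & Vc & Vk & Vl).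
    assert (E : forall x k, Vaux N alpha0 beta0 cv ch cb i (S (T - S t)) t x k =
       V (p_t N beta0 t) (cv i) (ch i) (cb i) (rZ alpha0) (rK N alpha0) (Vaux N alpha0 beta0 cv ch cb i (T - S t) (S t)) x k).
    { intros x k. rewrite HVe. simpl. apply inf_ge_ext. intros a. unfold Ccost, G.
      rewrite minus_IZR. ring. }
    intros x k1 k2 Hk12. rewrite !E. apply Vk; auto.
Qed.
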